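(* Let $\mathcal{N}$ be a chemical reaction network with stoichiometric subspace of dimension $s$, let $\{\omega^1,\dots,\omega^d\}$ be a reduced basis of $\Gamma^\perp$ and $\widetilde f_\kappa$ the associated extended rate function. The terms in the expansion of $\det(J_c(\widetilde f_\kappa))$ are monomials in $\kappa$ of total degree $s$ and of degree at most one in each rate constant. Further, let $R=\{y^1\to y'^1,\dots,y^s\to y'^s\}$ be a set of $s$ reactions of $\mathcal{N}$. For $c\in\mathbb{R}^n_+$, the coefficient of the monomial $\prod_{i=1}^s k_{y^i\to y'^i}$ in $\det(J_c(\widetilde f_\kappa))$ is $$(-1)^s\,c^{-\mathbf{1}+\sum_{i=1}^s y^i}\sum_{I\in\mathcal{O}_d(\mathcal{N})}\det(\mathcal{Y}(R)_I)\det(\Gamma(R)_I)\prod_{i\in I}c_i,$$ and equivalently it equals $$(-1)^d\,c^{-\mathbf{1}+\sum_{i=1}^s y^i}\sum_{R'\in\mathcal{R}_s,\ R'\cap\mathcal{R}=R}\sigma(R')\prod_{S_i\to 0\in R'\setminus R}c_i.$$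
   Context: A chemical reaction network $\mathcal{N}=(\mathcal{S},\mathcal{C},\mathcal{R})$ consists of a finite set of species $\mathcal{S}=\{S_1,\dots,S_n\}$, a finite set of complexes $\mathcal{C}\subset\mathbb{Z}_{\ge 0}^n$ (species $S_i$ identified with the $i$-th standard basis vector; zero complex allowed), and a finite set of reactions $\mathcal{R}\subset\mathcal{C}\times\mathcal{C}$, written $y\to y'$, with $y\ne y'$. A rate vector is $\kappa=(k_{y\to y'})\in\mathbb{R}_+^{\mathcal{R}}$ ($\mathbb{R}_+$ the positive reals); the mass-action species formation rate function is $f_\kappa(c)=\sum_{y\to y'\in\mathcal{R}}k_{y\to y'}c^y(y'-y)$ with $c^y=\prod_i c_i^{y_i}$ (also for integer exponents, e.g. $c^{-\mathbf 1+v}$ with $\mathbf 1=(1,\dots,1)$), components $f_{\kappa,i}$. The stoichiometric subspace is $\Gamma=\mathrm{span}\{y'-y:y\to y'\in\mathcal{R}\}$, $s=\dim\Gamma$, $d=n-s$. A basis $\{\omega^1,\dots,\omega^d\}$ of $\Gamma^\perp$ with $\omega^i=(\lambda^i_1,\dots,\lambda^i_n)$ is reduced if $\lambda^i_i=1$ and $\lambda^i_j=0$ for $j\in\{1,\dots,d\}$, $j\ne i$ (species assumed ordered so one exists). The extended rate function is $\widetilde f_\kappa(c)=(\omega^1\cdot c,\dots,\omega^d\cdot c,f_{\kappa,d+1}(c),\dots,f_{\kappa,n}(c))$; $J_c$ is the Jacobian at $c$. Let $\mathcal{O}(\mathcal{N})=\{i: S_i\to 0\notin\mathcal{R}\}$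 and $\mathcal{O}_d(\mathcal{N})$ the set of subsets of $\mathcal{O}(\mathcal{N})$ of cardinality $d$. For a set $R$ of $m$ reactions $y^i\to y'^i$, $\mathcal{Y}(R)$ is the $n\times m$ matrix with $i$-th column $y^i$ and $\Gamma(R)$ the $n\times m$ matrix with $i$-th column $y^i-y'^i$; for an $n\times s$ matrix $M$ and $I\in\mathcal{O}_d(\mathcal{N})$, $M_I$ is the $s\times s$ matrix obtained by deleting the rows with index in $I$. For a set $R'$ of $n$ reactions, $\sigma(R')=(-1)^n\det(\mathcal{Y}(R'))\det(\Gamma(R'))$. $\mathcal{R}_s$ is the set of all sets $R'$ of $n$ reactions of the form $R\cup\{S_i\to 0: i\in I\}$, where $R$ is a set of $s$ reactions of $\mathcal{R}$ and $I\in\mathcal{O}_d(\mathcal{N})$. *)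

(* Defs.v *)
From HB Require Import structures.
From mathcomp Require Import all_boot all_order all_algebra.
From mathcomp Require Import mpoly.
Set Implicit Arguments.
Unset Strict Implicit.
Unset Printing Implicit Defensive.
Import Order.TTheory GRing.Theory Num.Theory.
Local Open Scope ring_scope.

(* Species are indexed by 'I_n.  A complex is a vector of N^n.  A network
   with m reactions is given by an injective map  rs : 'I_m -> cplx * cplx,
   rs r = (y, y') meaning the reaction y -> y'. *)
Definition cplx (n : nat) := {ffun 'I_n -> nat}.

Definition unitc (n : nat) (i : 'I_n) : cplx n := [ffun j => (j == i) : nat].
Definition zeroc (n : nat) : cplx n := [ffun => 0%N].

Definition Oset (n m : nat) (rs : 'I_m -> cplx n * cplx n) : {set 'I_n} :=
  [set i | [forall r, rs r != (unitc i, zeroc n)]].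

Definition Od (n m d : nat) (rs : 'I_m -> cplx n * cplx n) : {set {set 'I_n}} :=
  [set I : {set 'I_n} | (I \subset Oset rs) && (#|I| == d)].

(* Stoichiometric matrix: row r is y'_r - y_r; Gamma is its row space. *)
Definition stoich (R : nzRingType) (n m : nat) (rs : 'I_m -> cplx n * cplx n)
  : 'M[R]_(m, n) := \matrix_(r, i) (((rs r).2 i)%:R - ((rs r).1 i)%:R).

(* A reduced basis of Gamma^perp (rows of Om), the first d species being
   the distinguished ones. *)
Definition reduced_basis (R : fieldType) (d s m : nat)
  (rs : 'I_m -> cplx (d + s) * cplx (d + s)) (Om : 'M[R]_(d, d + s)) : Prop :=
  [/\ row_free Om,
      (Om == kermx (stoich R rs)^T)%MS &
      forall (i : 'I_d) (j : 'I_(d + s)), (j < d)%N ->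
        Om i j = ((val i == val j) : nat)%:R].

(* Rate constants are formal variables 'X_r (r < m): polynomials in kappa
   are elements of {mpoly R[m]}. *)
Definition frate (R : comNzRingType) (n m : nat) (rs : 'I_m -> cplx n * cplx n)
  (i : 'I_n) : {mpoly {mpoly R[m]}[n]} :=
  \sum_(r < m) ('X_r : {mpoly R[m]})%:MP *
     (\prod_(j < n) 'X_j ^+ ((rs r).1 j)) *
     ((((rs r).2 i)%:R - ((rs r).1 i)%:R : {mpoly R[m]})%:MP).

Definition ftilde (R : comNzRingType) (d s m : nat)
  (rs : 'I_m -> cplx (d + s) * cplx (d + s)) (Om : 'M[R]_(d, d + s))
  (i : 'I_(d + s)) : {mpoly {mpoly R[m]}[d + s]} :=
  match split i with
  | inl i' => \sum_(j < d + s) ((Om i' j)%:MP : {mpoly R[m]})%:MP * 'X_j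
  | inr _ => frate R rs i
  end.

Definition jac (R : comNzRingType) (d s m : nat)
  (rs : 'I_m -> cplx (d + s) * cplx (d + s)) (Om : 'M[R]_(d, d + s))
  (c : 'I_(d + s) -> R) : 'M[{mpoly R[m]}]_(d + s) :=
  \matrix_(i, j) (mderiv j (ftilde rs Om i)).@[fun k => (c k)%:MP].

Definition monR (m : nat) (Rr : {set 'I_m}) : 'X_{1..m} :=
  [multinom ((i \in Rr) : nat) | i < m].

(* Extended reactions: inl r is the network reaction r, inr i is S_i -> 0. *)
Definition xreac (n m : nat) := ('I_m + 'I_n)%type.

Definition xsrc (n m : nat) (rs : 'I_m -> cplx n * cplx n) (x : xreac n m)
  : cplx n := match x with inl r => (rs r).1 | inr i => unitc i end.
Definition xtgt (n m : nat) (rs : 'I_m -> cplx n * cplx n) (x : xreac n m)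
  : cplx n := match x with inl r => (rs r).2 | inr _ => zeroc n end.

(* Y(X): n x k matrix whose j-th column is the source complex of the j-th
   reaction of X (reactions of X listed in the enumeration order);
   Gamma(X): same with columns y - y'. *)
Definition Ymat (R : nzRingType) (n m k : nat) (rs : 'I_m -> cplx n * cplx n)
  (X : {set xreac n m}) : 'M[R]_(n, k) :=
  \matrix_(i, j) ((xsrc rs (nth (inr i) (enum X) j) i)%:R).
Definition Gmat (R : nzRingType) (n m k : nat) (rs : 'I_m -> cplx n * cplx n)
  (X : {set xreac n m}) : 'M[R]_(n, k) :=
  \matrix_(i, j) ((xsrc rs (nth (inr i) (enum X) j) i)%:R
                  - (xtgt rs (nth (inr i) (enum X) j) i)%:R).

(* M_I: delete the rows with index in I (|I| = d) from a (d+s) x s matrix,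
   keeping the remaining rows in increasing order. *)
Definition delrows (T : Type) (d s : nat) (I : {set 'I_(d + s)})
  (M : 'M[T]_(d + s, s)) : 'M[T]_s :=
  rowsub (fun k : 'I_s => nth (rshift d k) (enum (~: I)) k) M.

Definition sigma (R : comNzRingType) (n m : nat) (rs : 'I_m -> cplx n * cplx n)
  (X : {set xreac n m}) : R :=
  (-1) ^+ n * \det (Ymat R n rs X) * \det (Gmat R n rs X).

Definition Rs (n m d s : nat) (rs : 'I_m -> cplx n * cplx n)
  : {set {set xreac n m}} :=
  [set X : {set xreac n m} | [exists Rr : {set 'I_m}, exists I : {set 'I_n},
     [&& #|Rr| == s, I \in Od d rs & X == (inl @: Rr) :|: (inr @: I)]]].

Definition cpow (R : unitRingType) (n m : nat) (rs : 'I_m -> cplx n * cplx n)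
  (Rr : {set 'I_m}) (c : 'I_n -> R) : R :=
  \prod_(i < n) c i ^ ((\sum_(r in Rr) (rs r).1 i)%:Z - 1).

(* Main.v *)
Require Import Defs.
From HB Require Import structures.
From mathcomp Require Import all_boot all_order all_algebra.
From mathcomp Require Import mpoly.
From mathcomp Require Import fingroup perm.
From mathcomp.algebra_tactics Require Import ring.
Import Order.TTheory GRing.Theory Num.Theory.
Local Open Scope ring_scope.

Set Implicit Arguments.
Unset Strict Implicit.
Unset Printing Implicit Defensive.

Section Gen.
Variable R : comNzRingType.

Lemma det_sum_rows (T : finType) n (G : 'I_n -> T -> 'I_n -> R) :
  \det (\matrix_(i, j) (\sum_k G i k j) : 'M[R]_n)
  = \sum_(f : {ffun 'I_n -> T}) \det (\matrix_(i, j) (G i (f i) j) : 'M[R]_n).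
Proof.
rewrite /determinant.
transitivity (\sum_(s : 'S_n) \sum_(f : {ffun 'I_n -> T})
   (-1) ^+ s * \prod_i G i (f i) (s i)).
  apply: eq_bigr => s _.
  rewrite (eq_bigr (fun i => \sum_k G i k (s i))) => [|i _]; last by rewrite mxE.
  by rewrite bigA_distr_bigA big_distrr.
rewrite exchange_big; apply: eq_bigr => f _; apply: eq_bigr => s _.
by congr (_ * _); apply: eq_bigr => i _; rewrite mxE.
Qed.

Lemma det_sum_rows_blk (T : finType) d s (U : 'M[R]_(d, d + s))
  (G : 'I_s -> T -> 'I_(d + s) -> R) :
  \det (col_mx U (\matrix_(i, j) \sum_k G i k j))
  = \sum_(f : {ffun 'I_s -> T}) \det (col_mx U (\matrix_(i, j) G i (f i) j)).
Proof.
rewrite /determinant.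
transitivity (\sum_(p : 'S_(d + s)) \sum_(f : {ffun 'I_s -> T})
   (-1) ^+ p * ((\prod_(i < d) U i (p (lshift s i))) * \prod_(i < s) G i (f i) (p (rshift d i)))).
  apply: eq_bigr => p _.
  rewrite big_split_ord /=.
  rewrite (eq_bigr (fun i => U i (p (lshift s i)))) => [|i _]; last by rewrite col_mxEu.
  rewrite (eq_bigr (fun i => \sum_k G i k (p (rshift d i)))) => [|i _]; last by rewrite col_mxEd mxE.
  by rewrite bigA_distr_bigA !big_distrr.
rewrite exchange_big; apply: eq_bigr => f _; apply: eq_bigr => p _.
rewrite big_split_ord /=; congr (_ * (_ * _)); apply: eq_bigr => i _.
  by rewrite col_mxEu.
by rewrite col_mxEd mxE.
Qed.

Lemma det_scale_rows n (a : 'I_n -> R) (M : 'M[R]_n) :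
  \det (\matrix_(i, j) (a i * M i j)) = (\prod_i a i) * \det M.
Proof.
have -> : \matrix_(i, j) (a i * M i j) = diag_mx (\row_i a i) *m M.
  by apply/matrixP => i j; rewrite mul_diag_mx !mxE.
by rewrite det_mulmx det_diag; congr (_ * _); apply: eq_bigr => i _; rewrite mxE.
Qed.

End Gen.

Section Gen2.
Variable R : comNzRingType.

Lemma det_Pmx_eq0 s (psi : {ffun 'I_s -> 'I_s}) : ~~ injectiveb psi ->
  \det (\matrix_(i, k) ((psi i == k)%:R) : 'M[R]_s) = 0.
Proof.
case/injectivePn => i1 [i2 Hne Heq].
apply: (determinant_alternate Hne) => k; by rewrite !mxE Heq.
Qed.

Lemma enum_inj_nth (T : finType) (S : {set T}) (s : nat) (e : 'I_s -> T)
  (cS : #|S| = s) (he : forall k, e k = nth (e k) (enum S) k) : injective e.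
Proof.
move=> k1 k2 Heq; apply: val_inj => /=.
have U := enum_uniq (pred_of_set S).
have Hs : size (enum S) = s by rewrite -cardE.
apply/eqP; rewrite -(nth_uniq (e k1) _ _ U) ?Hs //.
by rewrite -he Heq he (set_nth_default (e k2)) // Hs.
Qed.

Lemma enum_img (T : finType) (S : {set T}) (s : nat) (e : 'I_s -> T)
  (cS : #|S| = s) (he : forall k, e k = nth (e k) (enum S) k) :
  [set e k | k in 'I_s] = S.
Proof.
apply/eqP; rewrite eqEcard; apply/andP; split.
  apply/subsetP => x /imsetP [k _ ->]; rewrite he -mem_enum mem_nth //.
  by rewrite -cardE cS.
by rewrite card_imset ?card_ord ?cS //; apply: enum_inj_nth cS he.
Qed.

Lemma sum_fixed_image (T : finType) (s : nat) (S : {set T}) (e : 'I_s -> T)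
  (cS : #|S| = s) (he : forall k, e k = nth (e k) (enum S) k)
  (F : 'I_s -> T -> R) (D : {ffun 'I_s -> T} -> R)
  (HD : forall psi : {ffun 'I_s -> 'I_s}, D [ffun i => e (psi i)] =
      \det (\matrix_(i, k) ((psi i == k)%:R) : 'M[R]_s) * D [ffun k => e k]) :
  \sum_(phi : {ffun 'I_s -> T} | [set phi i | i in 'I_s] == S)
      (\prod_i F i (phi i)) * D phi
  = \det (\matrix_(i, k) F i (e k)) * D [ffun k => e k].
Proof.
have einj := enum_inj_nth cS he.
have eimg := enum_img cS he.
pose E (psi : {ffun 'I_s -> 'I_s}) : {ffun 'I_s -> T} := [ffun i => e (psi i)].
have Einj : injective E.
  move=> p1 p2 H; apply/ffunP => i; apply: einj.
  by have := congr1 (fun f : {ffun 'I_s -> T} => f i) H; rewrite /E !ffunE.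
have -> : \det (\matrix_(i, k) F i (e k)) =
   \sum_(psi : {ffun 'I_s -> 'I_s}) (\prod_i F i (e (psi i))) *
      \det (\matrix_(i, k) ((psi i == k)%:R) : 'M[R]_s).
  have -> : \matrix_(i, k) F i (e k) =
     \matrix_(i, j) (\sum_k F i (e k) * (k == j)%:R) :> 'M[R]_s.
    apply/matrixP => i j; rewrite !mxE (bigD1 j) //= eqxx mulr1.
    by rewrite big1 ?addr0 // => k /negbTE ->; rewrite mulr0.
  rewrite det_sum_rows.
  apply: eq_bigr => psi _; rewrite -det_scale_rows; congr (\det _).
  by apply/matrixP => i j; rewrite !mxE.
rewrite big_distrl /=.
transitivity (\sum_(phi in [set E psi | psi in setT]) (\prod_i F i (phi i)) * D phi).
  rewrite big_mkcond [RHS]big_mkcond /=; apply: eq_bigr => phi _.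
  case: ifP => Himg; case: ifP => Hin //.
  - (* image = S but not in range: impossible *)
    exfalso; move/negbT: Hin => /negP; apply; move/eqP: Himg => Himg.
    have Hphi : forall i, phi i \in S.
      by move=> i; rewrite -Himg; apply: imset_f.
    have Hlt : forall i, (index (phi i) (enum S) < s)%N.
      by move=> i; rewrite -[X in (_ < X)%N]cS cardE index_mem mem_enum.
    apply/imsetP; exists [ffun i => Ordinal (Hlt i)]; first by [].
    apply/ffunP => i; rewrite /E !ffunE he /= (set_nth_default (phi i)).
      by rewrite nth_index // mem_enum.
    by rewrite -cardE cS.
  - (* in range, image <> S: term is zero *)
    move: Himg; case/imsetP: Hin => psi _ -> Himg; rewrite /E HD.
    case: (boolP (injectiveb psi)) => Hinj.
      exfalso; move/negbT: Himg => /negP; apply.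
      rewrite -eimg.
      have Hpsi : [set psi i | i in 'I_s] = setT.
        apply/eqP; rewrite eqEcard subsetT cardsT card_imset ?card_ord ?leqnn //.
        by apply/injectiveP.
      apply/eqP/setP => x; apply/imsetP/imsetP => [[i _ ->]|[k _ ->]].
        by exists (psi i) => //; rewrite ffunE.
      have : k \in [set psi i | i in 'I_s] by rewrite Hpsi inE.
      by case/imsetP => i _ ->; exists i => //; rewrite ffunE.
    by rewrite det_Pmx_eq0 // mul0r mulr0.
rewrite big_imset /=; last by move=> x y _ _; apply: Einj.
rewrite [LHS](eq_bigl predT) => [|x]; last by rewrite inE.
apply: eq_bigr => psi _; rewrite /E HD mulrA; congr (_ * _ * _).
by apply: eq_bigr => i _; rewrite ffunE.
Qed.

End Gen2.

Section Gen3.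
Variable R : comNzRingType.

Lemma det_rows_noninj n s (B : 'M[R]_(n, s)) (phi : {ffun 'I_s -> 'I_n}) :
  ~~ injectiveb phi -> \det (\matrix_(i, l) B (phi i) l) = 0.
Proof.
case/injectivePn => i1 [i2 Hne Heq].
by apply: (determinant_alternate Hne) => k; rewrite !mxE Heq.
Qed.

Lemma cauchy_binet n s (A : 'M[R]_(s, n)) (B : 'M[R]_(n, s)) (dflt : 'I_s -> 'I_n) :
  \det (A *m B) = \sum_(S : {set 'I_n} | #|S| == s)
     \det (colsub (fun k => nth (dflt k) (enum S) k) A) *
     \det (rowsub (fun k => nth (dflt k) (enum S) k) B).
Proof.
have -> : A *m B = \matrix_(i, l) (\sum_j A i j * B j l).
  by apply/matrixP => i l; rewrite !mxE.
rewrite det_sum_rows.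
rewrite (eq_bigr (fun phi : {ffun 'I_s -> 'I_n} => (\prod_i A i (phi i)) *
     \det (\matrix_(i, l) B (phi i) l))); last first.
  move=> phi _; rewrite -det_scale_rows; congr (\det _).
  by apply/matrixP => i j; rewrite !mxE.
rewrite (partition_big (fun phi : {ffun 'I_s -> 'I_n} => [set phi i | i in 'I_s]) predT) //=.
rewrite (bigID (fun S : {set 'I_n} => #|S| == s)) /= [X in _ + X]big1 ?addr0; last first.
  move=> S HS; apply: big1 => phi /eqP Himg.
  case: (boolP (injectiveb phi)) => Hinj; last by rewrite det_rows_noninj // mulr0.
  exfalso; move/negP: HS; apply; rewrite -Himg card_imset ?card_ord //.
  exact/injectiveP.
apply: eq_bigr => S /eqP cS.
pose e := fun k : 'I_s => nth (dflt k) (enum S) k.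
have he : forall k, e k = nth (e k) (enum S) k.
  by move=> k; rewrite /e (set_nth_default (dflt k)) // -cardE cS.
rewrite (@sum_fixed_image R _ s S e cS he (fun i j => A i j)
   (fun phi : {ffun 'I_s -> 'I_n} => \det (\matrix_(i, l) B (phi i) l))); last first.
  move=> psi; rewrite -det_mulmx; congr (\det _); apply/matrixP => i l.
  rewrite !mxE (bigD1 (psi i)) //= !mxE eqxx mul1r !ffunE big1 ?addr0 //.
  by move=> k /negbTE Hk; rewrite !mxE eq_sym Hk mul0r.
congr (\det _ * \det _); apply/matrixP => i l; rewrite !mxE //.
by rewrite ffunE.
Qed.

End Gen3.

Section Jac.
Variables (R : realFieldType) (d s m : nat).
Variable (rs : 'I_m -> cplx (d + s) * cplx (d + s)).
Variable (Om : 'M[R]_(d, d + s)) (c : 'I_(d + s) -> R).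

Definition gg (i : 'I_s) (r : 'I_m) : R :=
  ((rs r).2 (rshift d i))%:R - ((rs r).1 (rshift d i))%:R.
Definition ww (r : 'I_m) (j : 'I_(d + s)) : R :=
  ((rs r).1 j)%:R * \prod_l c l ^+ ((rs r).1 l - (j == l))%N.

Lemma mderivXU (T : comNzRingType) k (j l : 'I_k) :
  mderiv j ('X_l : {mpoly T[k]}) = ((l == j)%:R)%:MP.
Proof.
rewrite mderivX mnm1E; case: eqP => [->|_]; last by rewrite scale0r.
have -> : (U_(j) - U_(j))%MM = 0%MM.
  by apply/mnmP => l0; rewrite mnmBE subnn mnmE.
by rewrite mpolyX0 scale1r.
Qed.

Lemma ftilde_up (i : 'I_d) : ftilde rs Om (lshift s i) =
  \sum_(j < d + s) ((Om i j)%:MP : {mpoly R[m]})%:MP * 'X_j.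
Proof. by rewrite /ftilde (unsplitK (inl _ : 'I_d + 'I_s)). Qed.

Lemma ftilde_down (i : 'I_s) : ftilde rs Om (rshift d i) = frate R rs (rshift d i).
Proof. by rewrite /ftilde (unsplitK (inr _ : 'I_d + 'I_s)). Qed.

Lemma mderiv_sum (T : comNzRingType) k (j : 'I_k) (I : finType) (F : I -> {mpoly T[k]}) :
  mderiv j (\sum_i F i) = \sum_i mderiv j (F i).
Proof. exact: raddf_sum. Qed.

Lemma meval_sum (T : comNzRingType) k (v : 'I_k -> T) (I : finType) (F : I -> {mpoly T[k]}) :
  (\sum_i F i).@[v] = \sum_i (F i).@[v].
Proof. exact: raddf_sum. Qed.

Lemma jac_up (i : 'I_d) j : jac rs Om c (lshift s i) j = (Om i j)%:MP.
Proof.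
rewrite mxE ftilde_up mderiv_sum meval_sum.
rewrite (bigD1 j) //= big1 ?addr0; last first.
  by move=> l Hl; rewrite mderiv_mulC mderivXU (negbTE Hl) mpolyC0 mulr0 meval0.
by rewrite mderiv_mulC mderivXU eqxx mpolyC1 mulr1 mevalC.
Qed.

Lemma jac_down (i : 'I_s) j : jac rs Om c (rshift d i) j =
  \sum_(r < m) 'X_r * ((gg i r * ww r j)%:MP).
Proof.
rewrite mxE ftilde_down /frate mderiv_sum meval_sum.
apply: eq_bigr => r _.
set y := (rs r).1.
have -> : \prod_(l < d + s) 'X_l ^+ y l = 'X_[[multinom y l | l < d + s]] :> {mpoly {mpoly R[m]}[d + s]}.
  by rewrite mpolyXE_id; apply: eq_bigr => l _; rewrite mnmE.
set P := ('X_[[multinom y l | l < d + s]] : {mpoly {mpoly R[m]}[d + s]}).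
set G := (_ - _ : {mpoly R[m]}).
rewrite (_ : ('X_r)%:MP * P * G%:MP = ('X_r * G)%:MP * P); last first.
  by rewrite mulrAC -mpolyCM.
rewrite mul_mpolyC mderivZ mderivX mevalZ mevalZ mevalX mnmE.
rewrite (eq_bigr (fun l => ((c l ^+ (y l - (j == l))%N)%:MP))); last first.
  by move=> l _; rewrite mnmBE mnmE mnm1E rmorphXn.
rewrite -rmorph_prod /gg /ww /G -/y.
rewrite !rmorphM /= rmorphB /= !rmorph_nat.
ring.
Qed.

End Jac.

Lemma det_scale_rows_blk (R : comNzRingType) d s (U : 'M[R]_(d, d + s)) (a : 'I_s -> R)
  (M : 'M[R]_(s, d + s)) :
  \det (col_mx U (\matrix_(i, j) (a i * M i j))) = (\prod_i a i) * \det (col_mx U M).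
Proof.
have -> : col_mx U (\matrix_(i, j) (a i * M i j)) =
    block_mx 1%:M 0 0 (diag_mx (\row_i a i)) *m col_mx U M.
  rewrite mul_block_col !mul1mx !mul0mx add0r addr0; congr col_mx.
  by apply/matrixP => i j; rewrite mul_diag_mx !mxE.
rewrite det_mulmx det_lblock det1 mul1r det_diag.
by congr (_ * _); apply: eq_bigr => i _; rewrite mxE.
Qed.

Section Exp.
Variables (R : realFieldType) (d s m : nat).
Variable (rs : 'I_m -> cplx (d + s) * cplx (d + s)).
Variable (Om : 'M[R]_(d, d + s)) (c : 'I_(d + s) -> R).

Definition Nmx (phi : {ffun 'I_s -> 'I_m}) : 'M[R]_(d + s) :=
  col_mx Om (\matrix_(i, j) ww rs c (phi i) j).

Definition mu (phi : {ffun 'I_s -> 'I_m}) : 'X_{1..m} := (\sum_i U_(phi i))%MM.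

Lemma jac_colmx : jac rs Om c = col_mx (map_mx (fun x => x%:MP) Om)
   (\matrix_(i, j) \sum_r 'X_r * ((gg R rs i r * ww rs c r j)%:MP)).
Proof.
apply/matrixP => i j; rewrite -[i]splitK; case: (split i) => k /=.
  by rewrite col_mxEu jac_up mxE.
by rewrite col_mxEd jac_down mxE.
Qed.

Lemma det_jac : \det (jac rs Om c) =
  \sum_(phi : {ffun 'I_s -> 'I_m})
     ((\prod_i gg R rs i (phi i)) * \det (Nmx phi)) *: 'X_[mu phi].
Proof.
rewrite jac_colmx det_sum_rows_blk; apply: eq_bigr => phi _.
pose a i := 'X_(phi i) * (gg R rs i (phi i))%:MP.
pose M := \matrix_(i, j) (ww rs c (phi i) j)%:MP : 'M[{mpoly R[m]}]_(s, d + s).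
rewrite (_ : \matrix_(i, j) _ = \matrix_(i, j) (a i * M i j)); last first.
  by apply/matrixP => i j; rewrite !mxE rmorphM mulrA.
rewrite det_scale_rows_blk.
have -> : col_mx (map_mx (fun x => x%:MP) Om) M = map_mx (@mpolyC m R) (Nmx phi).
  by rewrite /Nmx map_col_mx; congr col_mx; apply/matrixP => i j; rewrite !mxE.
rewrite det_map_mx /a big_split /= -rmorph_prod.
rewrite /mu -(big_morph (fun mm => 'X_[mm]) (@mpolyXD _ _) (@mpolyX0 _ _)).
by rewrite -mul_mpolyC rmorphM /=; ring.
Qed.

End Exp.

Section Coef.
Variables (R : realFieldType) (d s m : nat).
Variable (rs : 'I_m -> cplx (d + s) * cplx (d + s)).
Variable (Om : 'M[R]_(d, d + s)) (c : 'I_(d + s) -> R).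

Lemma mcoeff_sum (T : comNzRingType) k (mon : 'X_{1..k}) (I : finType) (F : I -> {mpoly T[k]}) :
  (\sum_i F i)@_mon = \sum_i (F i)@_mon.
Proof. exact: raddf_sum. Qed.

Lemma coef_jac mon : (\det (jac rs Om c))@_mon =
  \sum_(phi : {ffun 'I_s -> 'I_m} | mu phi == mon)
     (\prod_i gg R rs i (phi i)) * \det (Nmx rs Om c phi).
Proof.
rewrite det_jac mcoeff_sum [RHS]big_mkcond; apply: eq_bigr => phi _.
by rewrite mcoeffZ mcoeffX; case: eqP; rewrite ?mulr1 ?mulr0.
Qed.

Lemma Nmx_noninj (phi : {ffun 'I_s -> 'I_m}) : ~~ injectiveb phi -> \det (Nmx rs Om c phi) = 0.
Proof.
case/injectivePn => i1 [i2 Hne Heq].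
have Hne' : rshift d i1 != rshift d i2.
  by apply: contra Hne => /eqP /rshift_inj ->.
apply: (determinant_alternate Hne') => k.
by rewrite /Nmx !col_mxEd !mxE Heq.
Qed.

Lemma mu_E (phi : {ffun 'I_s -> 'I_m}) x : mu phi x = (\sum_i (phi i == x))%N.
Proof. by rewrite /mu mnm_sumE; apply: eq_bigr => i _; rewrite mnm1E. Qed.

Lemma cnt_notin (phi : {ffun 'I_s -> 'I_m}) x :
  x \notin [set phi i | i in 'I_s] -> (\sum_i (phi i == x))%N = 0%N.
Proof.
move=> Hx; apply: big1 => i _; case: eqP => // Hi.
by move: Hx; rewrite -Hi imset_f.
Qed.

Lemma cnt_in (phi : {ffun 'I_s -> 'I_m}) x :
  x \in [set phi i | i in 'I_s] -> (0 < \sum_i (phi i == x))%N.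
Proof.
case/imsetP => i0 _ ->; rewrite (bigD1 i0) //= eqxx.
by rewrite add1n.
Qed.

Lemma cnt_inj (phi : {ffun 'I_s -> 'I_m}) x : injective phi ->
  (\sum_i (phi i == x))%N = (x \in [set phi i | i in 'I_s]).
Proof.
move=> Hinj; case: (boolP (x \in _)) => Hx; last by rewrite cnt_notin.
case/imsetP: Hx => i0 _ ->; rewrite (bigD1 i0) //= eqxx big1 //.
by move=> i Hi; case: eqP => // /Hinj Heq; move: Hi; rewrite Heq eqxx.
Qed.

Lemma part1 mon : mon \in msupp (\det (jac rs Om c)) ->
  mdeg mon = s /\ forall r, (mon r <= 1)%N.
Proof.
rewrite mcoeff_msupp coef_jac => Hne.
case: (boolP [exists phi : {ffun 'I_s -> 'I_m}, (mu phi == mon) &&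
   ((\prod_i gg R rs i (phi i)) * \det (Nmx rs Om c phi) != 0)]); last first.
  move/existsPn => H; exfalso; move/negP: Hne; apply; apply/eqP.
  apply: big1 => phi Hphi; move: (H phi); rewrite Hphi /=.
  by move/negPn/eqP.
case/existsP => phi /andP [/eqP <- Hphi].
have Hinj : injective phi.
  apply/injectiveP; apply: contraT => Hn.
  by move: Hphi; rewrite Nmx_noninj // mulr0 eqxx.
split.
  rewrite /mu mdeg_sum (eq_bigr (fun _ => 1%N)) => [|i _]; last by rewrite mdeg1.
  by rewrite sum1_card card_ord.
by move=> r; rewrite mu_E cnt_inj //; case: (_ \in _).
Qed.

Lemma mu_monR (Rr : {set 'I_m}) (phi : {ffun 'I_s -> 'I_m}) : #|Rr| = s ->
  (mu phi == monR Rr) = ([set phi i | i in 'I_s] == Rr).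
Proof.
move=> cR; apply/eqP/eqP => H.
  apply/setP => x; move: (congr1 (fun mm : 'X_{1..m} => mm x) H) => /=.
  rewrite mu_E /monR mnmE.
  case: (boolP (x \in [set phi i | i in 'I_s])) => Hx.
    by move: (cnt_in Hx) => Hp Heq; rewrite Heq in Hp; case: (x \in Rr) Hp.
  by rewrite cnt_notin //; case: (x \in Rr).
have Hinj : injective phi.
  have : {in 'I_s &, injective phi}.
    by apply/imset_injP; rewrite H cR card_ord.
  by move=> HH i1 i2; apply: HH.
by apply/mnmP => x; rewrite mu_E cnt_inj // /monR mnmE H.
Qed.

Lemma coef_monR (Rr : {set 'I_m}) (cR : #|Rr| = s) (e : 'I_s -> 'I_m)
  (he : forall k, e k = nth (e k) (enum Rr) k) :
  (\det (jac rs Om c))@_(monR Rr) =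
  \det (\matrix_(i, k) gg R rs i (e k)) * \det (Nmx rs Om c [ffun k => e k]).
Proof.
rewrite coef_jac (eq_bigl _ _ (fun phi => mu_monR phi cR)).
apply: (@sum_fixed_image R _ s Rr e cR he (fun i r => gg R rs i r)
   (fun phi => \det (Nmx rs Om c phi))).
move=> psi; set P := \matrix_(i, k) ((psi i == k)%:R) : 'M[R]_s.
have -> : Nmx rs Om c [ffun i => e (psi i)] =
    block_mx 1%:M 0 0 P *m Nmx rs Om c [ffun k => e k].
  rewrite /Nmx mul_block_col !mul1mx !mul0mx add0r addr0.
  congr col_mx; apply/matrixP => i j; rewrite !mxE.
  rewrite (bigD1 (psi i)) //= !mxE eqxx mul1r !ffunE big1 ?addr0 //.
  by move=> k /negbTE Hk; rewrite !mxE eq_sym Hk mul0r.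
by rewrite det_mulmx det_lblock det1 mul1r.
Qed.

End Coef.

Lemma fin_enum_sum (T1 T2 : finType) : Finite.enum (T1 + T2)%type = sum_enum T1 T2.
Proof. by rewrite unlock. Qed.

Lemma enum_sum_set (T1 T2 : finType) (A : {set T1 + T2}) :
  enum A = map inl (enum [set x | inl x \in A]) ++ map inr (enum [set y | inr y \in A]).
Proof.
rewrite /enum_mem fin_enum_sum /sum_enum filter_cat !filter_map.
by congr (_ ++ _); congr (map _ _); apply: eq_filter => x; rewrite /= inE.
Qed.

Section Alg.
Variables (R : realFieldType) (d s m : nat).
Variable (rs : 'I_m -> cplx (d + s) * cplx (d + s)).
Variable (Om : 'M[R]_(d, d + s)) (c : 'I_(d + s) -> R).
Hypothesis Hred : forall (i : 'I_d) (j : 'I_(d + s)), (j < d)%N ->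
  Om i j = ((val i == val j) : nat)%:R.
Hypothesis Hker : Om *m (stoich R rs)^T = 0.
Hypothesis cnz : forall i, c i != 0.
Variables (Rr : {set 'I_m}) (e : 'I_s -> 'I_m).
Hypothesis cR : #|Rr| = s.
Hypothesis he : forall k, e k = nth (e k) (enum Rr) k.

Definition Yc : 'M[R]_(d + s, s) := Ymat R s rs (inl @: Rr).
Definition Gc : 'M[R]_(d + s, s) := Gmat R s rs (inl @: Rr).

Lemma enum_X : enum (inl @: Rr : {set xreac (d + s) m}) = map inl (enum Rr).
Proof.
rewrite enum_sum_set.
have -> : [set x | inl x \in (inl @: Rr : {set xreac (d + s) m})] = Rr.
  by apply/setP => x; rewrite inE (mem_imset _ _ (@inl_inj _ _)).
have -> : [set y | inr y \in (inl @: Rr : {set xreac (d + s) m})] = set0.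
  apply/setP => y; rewrite !inE; apply/negP => /imsetP [x _] //.
by rewrite enum_set0 cats0.
Qed.

Lemma nth_X (x0 : xreac (d + s) m) (k : 'I_s) :
  nth x0 (enum (inl @: Rr : {set xreac (d + s) m})) k = inl (e k).
Proof.
rewrite enum_X (nth_map (e k)) -?he //.
by rewrite -cardE cR.
Qed.

Lemma YcE i k : Yc i k = ((rs (e k)).1 i)%:R.
Proof. by rewrite mxE nth_X. Qed.

Lemma GcE i k : Gc i k = ((rs (e k)).1 i)%:R - ((rs (e k)).2 i)%:R.
Proof. by rewrite mxE nth_X. Qed.

Definition Lam := rsubmx Om.
Definition Kmx : 'M[R]_(d + s, s) := col_mx (- Lam) 1%:M.

Lemma Om_split : Om = row_mx 1%:M Lam.
Proof.
rewrite -[Om in LHS]hsubmxK; congr row_mx; apply/matrixP => i j.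
by rewrite !mxE Hred //=.
Qed.

Lemma Om_Gc : Om *m Gc = 0.
Proof.
apply/matrixP => i k; rewrite !mxE.
have := congr1 (fun M : 'M[R]_(d, m) => M i (e k)) Hker; rewrite !mxE => H.
transitivity (- \sum_j Om i j * (stoich R rs)^T j (e k)); last by rewrite H oppr0.
rewrite -sumrN; apply: eq_bigr => j _.
by rewrite GcE !mxE; ring.
Qed.

Lemma K_Glow : Kmx *m dsubmx Gc = Gc.
Proof.
rewrite /Kmx mul_col_mx mul1mx -[in RHS](vsubmxK Gc); congr col_mx.
have := Om_Gc; rewrite Om_split -[Gc in row_mx _ _ *m Gc](vsubmxK Gc) mul_row_col mul1mx.
by move/eqP; rewrite addr_eq0 => /eqP ->; rewrite mulNmx.
Qed.

Lemma det_gg : \det (\matrix_(i, k) gg R rs i (e k)) = (-1) ^+ s * \det (dsubmx Gc).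
Proof.
rewrite -detZ; congr (\det _); apply/matrixP => i k.
by rewrite !mxE nth_X /gg /=; ring.
Qed.

Lemma ww_eq r j : ww rs c r j =
  (\prod_l c l ^+ (rs r).1 l) * (((rs r).1 j)%:R * (c j)^-1).
Proof.
rewrite /ww; case E : ((rs r).1 j) => [|t]; first by rewrite !mul0r mulr0.
rewrite (bigD1 j) //= [in RHS](bigD1 j) //= E eqxx subn1 /=.
rewrite (eq_bigr (fun l => c l ^+ (rs r).1 l)); last first.
  by move=> l Hl; rewrite eq_sym (negbTE Hl) subn0.
have cj := cnz j.
by rewrite exprS; field.
Qed.

Definition Zmx : 'M[R]_(s, d + s) := \matrix_(k, j) (Yc j k * (c j)^-1).

Lemma det_Nmx : \det (Nmx rs Om c [ffun k => e k]) =
  (\prod_k \prod_l c l ^+ (rs (e k)).1 l) * \det (col_mx Om Zmx).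
Proof.
rewrite -det_scale_rows_blk /Nmx; congr (\det (col_mx _ _)).
by apply/matrixP => k j; rewrite !mxE ffunE ww_eq nth_X.
Qed.

Lemma det_colK (Z : 'M[R]_(s, d + s)) : \det (col_mx Om Z) = \det (Z *m Kmx).
Proof.
pose Q : 'M[R]_(d + s) := block_mx 1%:M (- Lam) 0 1%:M.
have HQ : \det Q = 1 by rewrite det_ublock !det1 mulr1.
rewrite -[LHS]mulr1 -HQ -det_mulmx.
have -> : col_mx Om Z *m Q = block_mx 1%:M 0 (lsubmx Z) (Z *m Kmx).
  rewrite mul_col_mx block_mxEv; congr col_mx.
    by rewrite Om_split mul_row_block mul1mx mulmx0 addr0 mulmx1 mul1mx addNr.
  have -> : Z *m Kmx = lsubmx Z *m - Lam + rsubmx Z.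
    by rewrite /Kmx -{1}[Z]hsubmxK mul_row_col mulmx1.
  by rewrite -{1}[Z]hsubmxK mul_row_block mulmx1 mulmx0 addr0 mulmx1.
by rewrite det_lblock det1 mul1r.
Qed.

Lemma coef_main :
  \det (\matrix_(i, k) gg R rs i (e k)) * \det (Nmx rs Om c [ffun k => e k])
  = (-1) ^+ s * (\prod_k \prod_l c l ^+ (rs (e k)).1 l) * \det (Zmx *m Gc).
Proof.
have -> : Zmx *m Gc = Zmx *m Kmx *m dsubmx Gc by rewrite -mulmxA K_Glow.
rewrite det_gg det_Nmx det_colK det_mulmx.
ring.
Qed.

Lemma prod_enum (T : finType) (S : {set T}) (F : T -> R) (f : 'I_s -> T) :
  #|S| = s -> (forall k, f k = nth (f k) (enum S) k) ->
  \prod_(j in S) F j = \prod_k F (f k).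
Proof.
move=> cS hf; rewrite -(enum_img cS hf) big_imset //=.
by move=> x y _ _; apply: (enum_inj_nth cS hf).
Qed.

Lemma CB : \det (Zmx *m Gc) = \sum_(I : {set 'I_(d + s)} | #|I| == d)
   (\prod_(j in ~: I) (c j)^-1) * \det (delrows I Yc) * \det (delrows I Gc).
Proof.
rewrite (cauchy_binet _ _ (fun k => rshift d k)).
rewrite (reindex_inj (@setC_inj _)) /=.
have Hc : forall I : {set 'I_(d + s)}, (#|~: I| == s) = (#|I| == d).
  move=> I; have := cardsC I; rewrite card_ord => H.
  by rewrite -(eqn_add2l #|I|) H eqn_add2r eq_sym.
apply: eq_big => [I|I /eqP cI]; first by rewrite Hc.
have cI' : #|~: I| = s := cI.
set f := fun k : 'I_s => nth (rshift d k) (enum (~: I)) k.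
have hf : forall k, f k = nth (f k) (enum (~: I)) k.
  by move=> k; rewrite /f (set_nth_default (rshift d k)) // -cardE cI'.
rewrite (prod_enum (fun j => (c j)^-1) cI' hf).
have -> : colsub f Zmx = (\matrix_(l, k) ((c (f l))^-1 * rowsub f Yc l k))^T.
  by apply/matrixP => k l; rewrite !mxE mulrC.
by rewrite det_tr det_scale_rows.
Qed.

Lemma delrows_Gc_zero (I : {set 'I_(d + s)}) : #|I| = d ->
  ~~ (I \subset Oset rs) -> \det (delrows I Gc) = 0.
Proof.
move=> cI; case/subsetPn => i HiI HiO.
have [r Hr] : exists r, rs r = (unitc i, zeroc (d + s)).
  move: HiO; rewrite inE negb_forall => /existsP [r /negPn /eqP Hr].
  by exists r.
have Omi : forall k, Om k i = 0.
  move=> k; have := congr1 (fun M : 'M[R]_(d, m) => M k r) Hker; rewrite !mxE.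
  rewrite (bigD1 i) //= big1 ?addr0; last first.
    by move=> j Hj; rewrite !mxE Hr !ffunE (negbTE Hj) subrr mulr0.
  by rewrite !mxE Hr !ffunE eqxx sub0r mulrN1 => /eqP; rewrite oppr_eq0 => /eqP.
have [i' Hi'] : exists i', i = rshift d i'.
  case: (splitP i) => [j Hj | j Hj]; last by exists j; apply: val_inj.
  exfalso; have := Omi j; rewrite Hred; last by rewrite Hj.
  by rewrite /= -Hj eqxx => /eqP; rewrite oner_eq0.
have KE : forall j, Kmx j i' = (j == i)%:R.
  move=> j; rewrite -[j]splitK Hi'; case: (split j) => j1 /=.
    rewrite col_mxEu !mxE -Hi' Omi oppr0.
    suff -> : (lshift s j1 == i) = false by [].
    by apply/negbTE; rewrite Hi' -val_eqE /= neq_ltn (leq_trans (ltn_ord j1)) ?leq_addr.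
  rewrite col_mxEd !mxE (inj_eq (@rshift_inj _ _)).
  by case: (j1 == i').
have -> : delrows I Gc = delrows I Kmx *m dsubmx Gc.
  rewrite -{1}K_Glow; apply/matrixP => a b; rewrite !mxE.
  by apply: eq_bigr => k _; rewrite !mxE.
rewrite det_mulmx; apply/eqP; rewrite mulf_eq0; apply/orP; left.
rewrite -det_tr; apply/det0P; exists (\row_k ((k == i')%:R)).
  apply/eqP => /matrixP /(_ 0 i'); rewrite !mxE eqxx => /eqP.
  by rewrite oner_eq0.
apply/matrixP => a l; rewrite !mxE (bigD1 i') //= big1 ?addr0; last first.
  by move=> k /negbTE Hk; rewrite !mxE Hk mul0r.
have -> : (delrows I Kmx)^T i' l = Kmx (nth (rshift d l) (enum (~: I)) l) i' by rewrite !mxE.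
rewrite KE !mxE eqxx mul1r.
have Hin : nth (rshift d l) (enum (~: I)) l \in ~: I.
  rewrite -mem_enum mem_nth // -cardE.
  have := cardsC I; rewrite card_ord cI => /eqP; rewrite eqn_add2l => /eqP ->.
  exact: ltn_ord.
case: eqP => // Heq; move: Hin; rewrite Heq inE HiI //.
Qed.

End Alg.

Lemma det_perm_sq (R : comNzRingType) n (M N : 'M[R]_n) (p q : {perm 'I_n}) :
  \det (col_perm q (row_perm p M)) * \det (col_perm q (row_perm p N)) = \det M * \det N.
Proof.
rewrite !col_permE !row_permE !det_mulmx !det_perm.
set a := (-1) ^+ p; set b := (-1) ^+ (q^-1)%g.
transitivity (a ^+ 2 * b ^+ 2 * (\det M * \det N)); first by ring.
by rewrite /a /b !sqrr_sign !mul1r.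
Qed.

Section Unit.
Variables (R : comNzRingType) (d s : nat) (I : {set 'I_(d + s)}).
Hypothesis cI : #|I| = d.

Lemma size_enumI : size (enum I) = d.
Proof. by rewrite -cardE. Qed.
Lemma size_enumCI : size (enum (~: I)) = s.
Proof.
rewrite -cardE; have := cardsC I; rewrite card_ord cI => /eqP.
by rewrite eqn_add2l => /eqP.
Qed.

Definition fr (a : 'I_(d + s)) : 'I_(d + s) :=
  match split a with inl a' => nth a (enum I) a' | inr b => nth a (enum (~: I)) b end.

Lemma fr_l a : fr (lshift s a) = nth (lshift s a) (enum I) a.
Proof. by rewrite /fr (unsplitK (inl a : 'I_d + 'I_s)). Qed.
Lemma fr_r b : fr (rshift d b) = nth (rshift d b) (enum (~: I)) b.
Proof. by rewrite /fr (unsplitK (inr b : 'I_d + 'I_s)). Qed.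

Lemma nthI_in x (a : 'I_d) : nth x (enum I) a \in I.
Proof. by rewrite -mem_enum mem_nth // size_enumI. Qed.
Lemma nthCI_in x (b : 'I_s) : nth x (enum (~: I)) b \in ~: I.
Proof. by rewrite -mem_enum mem_nth // size_enumCI. Qed.

Lemma nthI_inj x y (a a' : 'I_d) : (nth x (enum I) a == nth y (enum I) a') = (a == a').
Proof.
rewrite (set_nth_default x y) ?size_enumI // nth_uniq ?size_enumI //.
exact: enum_uniq.
Qed.
Lemma nthCI_inj x y (a a' : 'I_s) :
  (nth x (enum (~: I)) a == nth y (enum (~: I)) a') = (a == a').
Proof.
rewrite (set_nth_default x y) ?size_enumCI // nth_uniq ?size_enumCI //.
exact: enum_uniq.
Qed.
Lemma nth_ICI x y (a : 'I_d) (b : 'I_s) : (nth x (enum I) a == nth y (enum (~: I)) b) = false.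
Proof.
apply/negbTE/eqP => H; have := nthCI_in y b; rewrite -H inE nthI_in //.
Qed.

Lemma fr_inj : injective fr.
Proof.
move=> a1 a2; rewrite -[a1]splitK -[a2]splitK.
case: (split a1) => x1; case: (split a2) => x2 /=;
  rewrite ?fr_l ?fr_r => /eqP; rewrite ?nthI_inj ?nthCI_inj ?nth_ICI //.
  by move=> /eqP ->.
by rewrite eq_sym nth_ICI.
by move=> /eqP ->.
Qed.

Lemma lt_sa (a : 'I_d) : (s + a < d + s)%N.
Proof. by rewrite addnC ltn_add2r. Qed.

Definition gc (a : 'I_(d + s)) : 'I_(d + s) :=
  match split a with inl a' => Ordinal (lt_sa a') | inr b => widen_ord (leq_addl d s) b end.

Lemma gc_l a : gc (lshift s a) = Ordinal (lt_sa a).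
Proof. by rewrite /gc (unsplitK (inl a : 'I_d + 'I_s)). Qed.
Lemma gc_r b : gc (rshift d b) = widen_ord (leq_addl d s) b.
Proof. by rewrite /gc (unsplitK (inr b : 'I_d + 'I_s)). Qed.

Lemma gc_inj : injective gc.
Proof.
move=> a1 a2; rewrite -[a1]splitK -[a2]splitK.
case: (split a1) => x1; case: (split a2) => x2 /=;
  rewrite ?gc_l ?gc_r => /(congr1 val) /= H.
- by congr lshift; apply: val_inj; move/eqP: H; rewrite eqn_add2l => /eqP.
- by move: (ltn_ord x2); rewrite -H ltnNge leq_addr.
- by move: (ltn_ord x1); rewrite H ltnNge leq_addr.
- by congr rshift; apply: val_inj.
Qed.

Lemma det_unit_block (M : 'M[R]_(d + s)) (A : 'M[R]_(d + s, s)) :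
  (forall i (a : 'I_d), M i (gc (lshift s a)) = (i == nth i (enum I) a)%:R) ->
  (forall i (b : 'I_s), M i (gc (rshift d b)) = A i b) ->
  \det (col_perm (perm gc_inj) (row_perm (perm fr_inj) M)) = \det (delrows I A).
Proof.
move=> HMu HMd.
set P := col_perm _ _.
rewrite -[P]submxK.
have -> : ulsubmx P = 1%:M.
  apply/matrixP => a a'; rewrite !mxE !permE /= HMu fr_l nthI_inj.
  by [].
have -> : dlsubmx P = 0.
  apply/matrixP => b a'; rewrite !mxE !permE /= HMu fr_r eq_sym nth_ICI.
  by [].
have -> : drsubmx P = delrows I A.
  by apply/matrixP => b b'; rewrite !mxE !permE /= HMd fr_r.
by rewrite det_ublock det1 mul1r.
Qed.

End Unit.

Section Fin.
Variables (R : realFieldType) (d s m : nat).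
Variable (rs : 'I_m -> cplx (d + s) * cplx (d + s)).
Variable (c : 'I_(d + s) -> R).
Hypothesis cnz : forall i, c i != 0.
Variables (Rr : {set 'I_m}) (e : 'I_s -> 'I_m).
Hypothesis cR : #|Rr| = s.
Hypothesis he : forall k, e k = nth (e k) (enum Rr) k.

Lemma sum_enum_nat (F : 'I_m -> nat) : (\sum_(r in Rr) F r)%N = (\sum_k F (e k))%N.
Proof.
rewrite -(enum_img cR he) big_imset //=.
by move=> x y _ _; apply: (enum_inj_nth cR he).
Qed.

Lemma cpowE : cpow rs Rr c =
  \prod_i (c i ^+ (\sum_(r in Rr) (rs r).1 i)%N * (c i)^-1).
Proof.
rewrite /cpow; apply: eq_bigr => i _.
by rewrite expfzDr ?cnz // exprN1 -exprnP.
Qed.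

Lemma scal (I : {set 'I_(d + s)}) :
  (\prod_k \prod_l c l ^+ (rs (e k)).1 l) * \prod_(j in ~: I) (c j)^-1
  = cpow rs Rr c * \prod_(i in I) c i.
Proof.
rewrite cpowE.
rewrite big_split /= exchange_big /=.
rewrite (eq_bigr (fun l => c l ^+ (\sum_(r in Rr) (rs r).1 l)%N)); last first.
  by move=> l _; rewrite prodrXr sum_enum_nat.
rewrite [X in _ = _ * X * _](bigID (fun i => i \in I)) /=.
set B := \prod_(i < d + s | i \notin I) (c i)^-1.
have HB : \prod_(j in ~: I) (c j)^-1 = B by apply: eq_bigl => j; rewrite inE.
set A := \prod_(i in I) (c i)^-1.
have HA : A * \prod_(i in I) c i = 1.
  by rewrite /A -big_split big1 // => i _ /=; rewrite mulVf ?cnz.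
rewrite HB; set C := \prod_(i < d + s) _.
transitivity (C * B * (A * \prod_(i in I) c i)); last by ring.
by rewrite HA mulr1.
Qed.

End Fin.

Section HX.
Variables (n m : nat).

Definition hX (A : {set 'I_m}) (B : {set 'I_n}) : {set xreac n m} := (inl @: A) :|: (inr @: B).

Lemma hX_l A B : [set x | inl x \in hX A B] = A.
Proof.
apply/setP => x; rewrite !inE (mem_imset _ _ (@inl_inj _ _)).
case: (x \in A) => //=; apply/negP => /imsetP [y _] //.
Qed.

Lemma hX_r A B : [set y | inr y \in hX A B] = B.
Proof.
apply/setP => x; rewrite !inE (mem_imset _ _ (@inr_inj _ _)).
case: (x \in B); rewrite ?orbT //= orbF; apply/negP => /imsetP [y _] //.
Qed.

Lemma enum_hX A B : enum (hX A B) = map inl (enum A) ++ map inr (enum B).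
Proof. by rewrite enum_sum_set hX_l hX_r. Qed.

End HX.

Section DetHX.
Variables (R : realFieldType) (d s m : nat).
Variable (rs : 'I_m -> cplx (d + s) * cplx (d + s)).
Variables (Rr : {set 'I_m}) (e : 'I_s -> 'I_m).
Hypothesis cR : #|Rr| = s.
Hypothesis he : forall k, e k = nth (e k) (enum Rr) k.

Lemma nth_hX_l (I : {set 'I_(d + s)}) x (b : 'I_s) :
  nth x (enum (hX Rr I)) b = inl (e b).
Proof.
rewrite enum_hX nth_cat size_map -cardE cR ltn_ord (nth_map (e b)) -?he //.
by rewrite -cardE cR.
Qed.

Lemma nth_hX_r (I : {set 'I_(d + s)}) (cI : #|I| = d) (i : 'I_(d + s)) (a : 'I_d) :
  nth (inr i) (enum (hX Rr I)) (s + a) = inr (nth i (enum I) a).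
Proof.
rewrite enum_hX nth_cat size_map -cardE cR ltnNge leq_addr /= addKn.
by rewrite (nth_map i) // -cardE cI.
Qed.

Lemma det_hX (I : {set 'I_(d + s)}) (cI : #|I| = d) :
  \det (Ymat R (d + s) rs (hX Rr I)) * \det (Gmat R (d + s) rs (hX Rr I))
  = \det (delrows I (Yc R rs Rr)) * \det (delrows I (Gc R rs Rr)).
Proof.
rewrite -(det_perm_sq _ _ (perm (fr_inj cI)) (perm (@gc_inj d s))).
rewrite (det_unit_block cI (A := Yc R rs Rr)); last first.
- by move=> i b; rewrite mxE gc_r nth_hX_l (YcE R rs cR he).
- by move=> i a; rewrite mxE gc_l nth_hX_r //= ffunE.
rewrite (det_unit_block cI (A := Gc R rs Rr)) //.
- by move=> i a; rewrite mxE gc_l nth_hX_r //= !ffunE subr0.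
- by move=> i b; rewrite mxE gc_r nth_hX_l (GcE R rs cR he).
Qed.

End DetHX.

Unset Implicit Arguments.
Set Strict Implicit.

Theorem corollary7p3 (R : realFieldType) (d s m : nat)
  (rs : 'I_m -> cplx (d + s) * cplx (d + s))
  (rs_inj : injective rs)
  (rs_neq : forall r, (rs r).1 != (rs r).2)
  (dimGamma : \rank (stoich R rs) = s)
  (Om : 'M[R]_(d, d + s))
  (Om_red : reduced_basis rs Om)
  (c : 'I_(d + s) -> R) (c_pos : forall i, 0 < c i) :
  (forall mon, mon \in msupp (\det (jac rs Om c)) ->
     mdeg mon = s /\ forall r, (mon r <= 1)%N)
  /\
  (forall Rr : {set 'I_m}, #|Rr| = s ->
     ((\det (jac rs Om c))@_(monR Rr)
       = (-1) ^+ s * cpow rs Rr c *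
         \sum_(I in Od d rs)
            \det (delrows I (Ymat R s rs (inl @: Rr)))
          * \det (delrows I (Gmat R s rs (inl @: Rr)))
          * \prod_(i in I) c i)
     /\
     ((\det (jac rs Om c))@_(monR Rr)
       = (-1) ^+ d * cpow rs Rr c *
         \sum_(X in Rs d s rs | [set r | inl r \in X] == Rr)
            sigma R rs X * \prod_(i | inr i \in X) c i)).
Proof.
case: Om_red => _ HOm Hred.
have Hker : Om *m (stoich R rs)^T = 0.
  by move: HOm => /andP [H1 _]; move: H1; rewrite sub_kermx => /eqP.
have cnz : forall i, c i != 0 by move=> i; rewrite gt_eqF ?c_pos.
split; first exact: part1.
move=> Rr cR.
pose e := fun k : 'I_s => enum_val (cast_ord (esym cR) k).
have he : forall k, e k = nth (e k) (enum Rr) k.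
  move=> k; rewrite {1}/e /enum_val /= (set_nth_default (e k)) //.
  by rewrite -cardE cR.
have Hcoef : (\det (jac rs Om c))@_(monR Rr) = (-1) ^+ s * cpow rs Rr c *
   \sum_(I in Od d rs) \det (delrows I (Yc R rs Rr)) * \det (delrows I (Gc R rs Rr))
      * \prod_(i in I) c i.
  rewrite (coef_monR _ _ _ cR he) (coef_main Hred Hker cnz cR he) CB.
  rewrite -!mulrA; congr (_ * _); rewrite !big_distrr /=.
  rewrite (bigID (fun I : {set 'I_(d + s)} => I \subset Oset rs)) /=.
  rewrite [X in _ + X]big1 ?addr0; last first.
    move=> I /andP [/eqP cI HI].
    by rewrite (delrows_Gc_zero Hred Hker cR he cI HI) !mulr0.
  apply: eq_big => [I|I /andP [/eqP cI _]]; first by rewrite inE andbC.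
  transitivity ((\prod_k \prod_l c l ^+ (rs (e k)).1 l) *
    \prod_(j in ~: I) (c j)^-1 * (\det (delrows I (Yc R rs Rr)) *
      \det (delrows I (Gc R rs Rr)))); first by ring.
  by rewrite (scal rs cnz cR he); ring.
split; first exact: Hcoef.
rewrite Hcoef.
rewrite (reindex_onto (fun I => hX Rr I) (fun X => [set i | inr i \in X])) /=; last first.
  move=> X /andP [HX /eqP HR].
  move: HX; rewrite inE => /existsP [Rr' /existsP [I' /and3P [_ _ /eqP HXe]]].
  have HXe' : X = hX Rr' I' := HXe.
  by rewrite HXe' hX_l in HR; rewrite HXe' hX_r HR.
rewrite [in RHS](eq_bigl (fun I => I \in Od d rs)); last first.
  move=> I; rewrite hX_l hX_r !eqxx !andbT.
  apply/idP/idP.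
    rewrite inE => /existsP [Rr' /existsP [I' /and3P [_ HI' /eqP HXe]]].
    have HXe' : hX Rr I = hX Rr' I' := HXe.
    by have := congr1 (fun X : {set xreac (d + s) m} => [set y | inr y \in X]) HXe'; rewrite !hX_r => ->.
  move=> HI; rewrite inE; apply/existsP; exists Rr; apply/existsP; exists I.
  by rewrite cR eqxx HI /=; apply/eqP.
have Hterm : forall I, I \in Od d rs ->
    sigma R rs (hX Rr I) * \prod_(i | inr i \in hX Rr I) c i =
    (-1) ^+ (d + s) * (\det (delrows I (Yc R rs Rr)) * \det (delrows I (Gc R rs Rr))
      * \prod_(i in I) c i).
  move=> I; rewrite inE => /andP [_ /eqP cI].
  rewrite /sigma -mulrA (det_hX R rs cR he cI).
  rewrite [in LHS](eq_bigl (fun i => i \in I)); last first.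
    by move=> i; have := hX_r Rr I; move/setP/(_ i); rewrite inE.
  by ring.
rewrite (eq_bigr _ Hterm) -big_distrr /= exprD.
set S := \sum_(I in Od d rs) _.
transitivity (((-1) ^+ d) ^+ 2 * ((-1) ^+ s * cpow rs Rr c * S)); last by ring.
by rewrite sqrr_sign mul1r.
Qed.
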